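(* Let $\mathcal H$ be a hypothesis class with coVC dimension $k>0$. For any sample $S$ not realizable by $\mathcal H$ and any $h_1,\dots,h_T\in\mathcal H$, there is $(x,y)\in S$ such that $\frac1T\sum_{t=1}^T1[h_t(x)\ne y]\ge\frac1k$.
   Context: A sample is a finite sequence of examples $(x,y)\in\mathcal X\times\{\pm1\}$; it is realizable by $\mathcal H$ if some $h\in\mathcal H$ agrees with all its examples. A subsample of $S$ is a sample all of whose examples appear in $S$; the coVC dimension of $\mathcal H$ is the smallest $k$ such that every non-realizable sample has a non-realizable subsample of size at most $k$. *)

(* Defs.v *)
From mathcomp Require Import all_boot all_algebra.
From Stdlib Require List.
Set Implicit Arguments. Unset Strict Implicit. Unset Printing Implicit Defensive.

(* Labels {+1,-1} are represented by bool (true = +1, false = -1).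
   A hypothesis is a function X -> bool; a hypothesis class is a set
   of hypotheses, i.e. a predicate on (X -> bool). *)

Definition sample (X : Type) := seq (X * bool).

Definition realizable (X : Type) (H : (X -> bool) -> Prop) (S : sample X) :=
  exists h, H h /\ forall p, List.In p S -> h p.1 = p.2.

Definition subsample (X : Type) (S' S : sample X) :=
  forall p, List.In p S' -> List.In p S.

Definition coVC_bound (X : Type) (H : (X -> bool) -> Prop) (k : nat) :=
  forall S : sample X, ~ realizable H S ->
    exists S' : sample X, [/\ subsample S' S, ~ realizable H S' & size S' <= k].

Definition coVC_dim (X : Type) (H : (X -> bool) -> Prop) (k : nat) :=
  coVC_bound H k /\ forall k', coVC_bound H k' -> k <= k'.

(* Main.v *)
Require Import Defs.
From mathcomp Require Import all_boot all_algebra.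
From mathcomp Require Import zify.
Import GRing.Theory Num.Theory.
Local Open Scope ring_scope.

Lemma sum0_seq (X : Type) (s : seq X) (b : X -> nat) :
  (\sum_(p <- s) b p = 0)%N -> forall p, List.In p s -> b p = 0%N.
Proof.
elim: s => [|a s IH] //=; rewrite big_cons => /eqP; rewrite addn_eq0 => /andP[/eqP ha /eqP hs] p [<-|hp] //.
exact: IH.
Qed.

Lemma pigeon (X : Type) (s : seq X) (g : X -> nat) :
  s <> [::] -> exists2 p, List.In p s & (\sum_(q <- s) g q <= size s * g p)%N.
Proof.
elim: s => [|a s IH] // _.
case: s IH => [|b s] IH.
  by exists a; [left | rewrite big_cons big_nil /=; lia].
have [p hp hle] := IH ltac:(discriminate).
rewrite big_cons.
case: (leqP (g a) (g p)) => hap.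
  exists p; first by right.
  move: hle; rewrite /= => hle. nia.
exists a; first by left.
move: hle; rewrite /= => hle. nia.
Qed.

Theorem claim1 (X : Type) (H : (X -> bool) -> Prop) (k : nat)
    (S : sample X) (T : nat) (h : 'I_T -> X -> bool) :
  coVC_dim H k -> (0 < k)%N -> ~ realizable H S -> (0 < T)%N ->
  (forall t, H (h t)) ->
  exists2 p, List.In p S &
    1 / k%:R <= (\sum_(t < T) ((h t p.1 != p.2)%:R : rat)) / T%:R.
Proof.
move=> [hb _] kpos nr Tpos hH.
have [S' [sub nr' sz]] := hb S nr.
set g := fun p : X * bool => (\sum_(t < T) (h t p.1 != p.2))%N.
have err : forall t : 'I_T, (1 <= \sum_(p <- S') (h t p.1 != p.2))%N.
  move=> t; rewrite lt0n; apply/negP => /eqP h0.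
  apply: nr'; exists (h t); split => // p hp.
  have := @sum0_seq _ _ _ h0 _ hp. by case: eqP.
have hsum : (T <= \sum_(p <- S') g p)%N.
  rewrite /g exchange_big /=.
  have e1 : (\sum_(t < T) 1 <= \sum_(t < T) \sum_(p <- S') (h t p.1 != p.2))%N.
    by apply: leq_sum => t _; exact: err.
  by move: e1; rewrite sum_nat_const card_ord muln1.
have ne : S' <> [::] by move=> e; move: hsum; rewrite e big_nil; lia.
have [p hp hle] := @pigeon _ _ g ne.
exists p; first exact: sub.
rewrite -natr_sum -/(g p).
have kT : (T <= k * g p)%N by apply: (leq_trans hsum); apply: (leq_trans hle); rewrite leq_mul2r sz orbT.
have k0 : (0 : rat) < k%:R by rewrite ltr0n.
have T0 : (0 : rat) < T%:R by rewrite ltr0n.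
rewrite ler_pdivlMr // mulrC mulrA ler_pdivrMr // ?mul1r.
by rewrite mulr1 -natrM ler_nat mulnC.
Qed.
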